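(* Let $p$ be an odd prime. (1) Take $k=0$. For every $s\ge2$, $$\mathcal M_{V_{s+2,0}}=p\,\mathcal M_{V_{s,0}}+(p-1)\,\mathcal M_{V_{s+1,0}}+p^{s-1}(p-1)(p^2-1).$$ (2) Take $k=1$. For every $s\ge3$ and $0\le t\le p-1$, $$\mathcal M_{V_{s+2,t}}=\sum_{t_2=0}^{p-1}\mathcal M_{V_{s,t_2}}+\sum_{t_1=1}^{p-1}\mathcal M_{V_{s+1,t_1}}+b_{s,t},$$ where $b_{s,t}=p^{s-1}(p-1)(p^2+p+t)$ if $0\le t<\frac{p-1}{2}$ and $b_{s,t}=p^{s-1}(p-1)(p^2+t)$ if $\frac{p-1}{2}\le t\le p-1$.
   Context: Fix an odd prime $p$ and an integer $k\ge 0$. For integers $0\le i<n$ write $\lambda(n,i)=(n-i,1^i)$ for the hook partition of $n$ with $n-i$ boxes in its first row and $i$ further boxes in its first column. If $\mu=\lambda(n',i')$ is obtained from $\lambda(n,i)$ by appending $m=(n'-i')-(n-i)\ge 0$ boxes to the first row and $n''=i'-i\ge 0$ boxes to the first column, we say $\mu$ is obtained by adding the block $B_{m,n''}$ ($m$ horizontal nodes, $n''$ vertical nodes). Put $x_s=p^k(sp-(s+1))$. The relevant part (''column $k$'') of the $p$-Bratteli diagram is the graded directed graph with vertices: on floor $2k+1$, $S_i=\lambda(p^k(p-1),i)$ for $0\le i<p^k(p-1)$; on floor $2(k+s)$ ($s\ge1$), $V_{s,l}=\lambda\big(p^k(2sp-(2s+1)),\,x_s+l\big)$ for $0\le l<p^k$;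 on floor $2(k+s)-1$ ($s\ge2$), $W_{s,l'}=\lambda\big(p^k((2s-1)p-2s),\,x_{s-1}+l'\big)$ for $0\le l'<p^{k+1}$; and edges, each labelled by the block added: (E1) $S_i\to V_{1,l}$ exactly when $i=p^kt+l$ with $0\le t\le p-2$, block $B_{p^kt,\,p^k(p-2-t)}$; (E2) for $s\ge2$, $0\le l<p^k$, $0\le\beta\le p-1$: $V_{s-1,l}\to W_{s,pl+\beta}$, block $B_{p^k(p-1)-((p-1)l+\beta),\,(p-1)l+\beta}$; (E3) for $s\ge 2$, $0\le l'<p^{k+1}$ and $t=\lfloor l'/p^k\rfloor$: $W_{s,l'}\to V_{s,l'-p^kt}$, block $B_{p^kt,\,p^k(p-1-t)}$. A path ending at a vertex $v$ is a sequence of edges starting at some $S_i$ and going up one floor at a time to $v$ ($S_i\to V_{1,\cdot}\to W_{2,\cdot}\to V_{2,\cdot}\to W_{3,\cdot}\to\cdots\to v$); $\mathcal P(v)$ is the set of all paths ending at $v$. The blocks of a path are numbered $B^2,B^3,\dots,B^N$: $B^2$ is the block of the edge leaving $S_i$, and for $j\ge2$, $B^{2j-1}$ is the block of the edge into $W_{j,\cdot}$ and $B^{2j}$ the block of the edge into $V_{j,\cdot}$. Write $B^j=B_{m_j,n_j}$. Descents: $1\in\mathrm{Des}(P)$ iff $m_2=p^kt$ with $0\le t<\frac{p-1}{2}$; $2\notin\mathrm{Des}(P)$; for $3\le j<N$, $j\in\mathrm{Des}(P)$ iff $m_j>m_{j+1}$ and $n_j<n_{j+1}$. $\mathrm{des}(P)=|\mathrm{Des}(P)|$.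 The $p^k$-Fibonacci number of a vertex $v$ is $\mathcal M_v=\sum_{P\in\mathcal P(v)}\mathrm{des}(P)$. *)

(* Defs.v *)
From mathcomp Require Import all_boot.
Set Implicit Arguments. Unset Strict Implicit. Unset Printing Implicit Defensive.

(* A path ending at V_{s,l} is encoded by
   the list of indices of the vertices it visits, one per floor:
     [:: i; l_1; l'_2; l_2; ...; l'_s; l_s]
   (position 0: S_i, odd position 2j-1: V_{j,l_j}, even position 2j-2>=2:
   W_{j,l'_j}).  Between two given vertices there is at most one edge, so a
   path is determined by its vertex sequence. *)

Definition vrange (p k a u : nat) : bool :=
  let q := p ^ k in
  if a == 0 then u < q * (p - 1)
  else if odd a then u < q
  else u < q * p.

Definition edge (p k a u v : nat) : bool :=
  let q := p ^ k in
  if a == 0 then [exists t : 'I_(p - 1), u == q * t + v]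
  else if odd a then [exists b : 'I_p, v == p * u + b]
  else v == u - q * (u %/ q).

Definition blk (p k a u v : nat) : nat * nat :=
  let q := p ^ k in
  if a == 0 then let t := u %/ q in (q * t, q * (p - 2 - t))
  else if odd a then
    let c := (p - 1) * u + (v - p * u) in (q * (p - 1) - c, c)
  else let t := u %/ q in (q * t, q * (p - 1 - t)).

Definition is_pathV (p k s l : nat) (x : seq nat) : bool :=
  [&& 0 < s, size x == 2 * s,
      all (fun a => vrange p k a (nth 0 x a)) (iota 0 (size x)),
      all (fun a => edge p k a (nth 0 x a) (nth 0 x a.+1)) (iota 0 (size x).-1)
    & last 0 x == l].

(* the block B^j of a path, j = 2..N with N = size x *)
Definition block (p k : nat) (x : seq nat) (j : nat) : nat * nat :=
  blk p k (j - 2) (nth 0 x (j - 2)) (nth 0 x (j - 1)).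

Definition des1 (p k : nat) (x : seq nat) : bool :=
  [exists t : 'I_((p - 1) %/ 2), (block p k x 2).1 == p ^ k * t].

Definition desj (p k : nat) (x : seq nat) (j : nat) : bool :=
  ((block p k x j).1 > (block p k x j.+1).1) &&
  ((block p k x j).2 < (block p k x j.+1).2).

Definition des (p k : nat) (x : seq nat) : nat :=
  des1 p k x + \sum_(3 <= j < size x) desj p k x j.

(* p^k-Fibonacci number of V_{s,l}: sum of des over all paths ending at V_{s,l}.
   All vertex indices are < p^(k+1), so enumerating tuples over 'I_(p^(k+1))
   covers every path. *)
Definition MV (p k s l : nat) : nat :=
  \sum_(x : (2 * s).-tuple 'I_(p ^ k.+1) | is_pathV p k s l (map val x))
     des p k (map val x).

(* Main.v *)
Require Import Defs.
From mathcomp Require Import all_boot zify.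
Set Implicit Arguments. Unset Strict Implicit. Unset Printing Implicit Defensive.

Lemma thead_behead (T : Type) n (t : n.+1.-tuple T) : thead t :: behead t = val t.
Proof. case: t => [[|c s] H] //=. Qed.

Lemma sum_tuple_rcons (T : finType) n (F : seq T -> nat) :
  \sum_(x : n.+1.-tuple T) F x = \sum_(x : n.-tuple T) \sum_(a : T) F (rcons x a).
Proof.
rewrite pair_big /=.
pose h (u : n.-tuple T * T) : n.+1.-tuple T := [tuple of rcons u.1 u.2].
rewrite (reindex h) /=; first by [].
exists (fun t : n.+1.-tuple T => ([tuple of belast (thead t) (behead t)], last (thead t) (behead t))).
- move=> [x a] _ /=.
  have e : rcons (belast (thead (h (x, a))) (behead (h (x,a)))) (last (thead (h (x, a))) (behead (h (x,a)))) = rcons x a.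
    by rewrite -lastI thead_behead.
  case/rcons_inj: e => e1 e2. by congr pair; [apply/val_inj|].
- move=> t _. apply/val_inj => /=. by rewrite -lastI thead_behead.
Qed.

Lemma sum_tuple0 (T : finType) (F : 0.-tuple T -> nat) :
  \sum_(x : 0.-tuple T) F x = F [tuple].
Proof.
rewrite (eq_bigr (fun _ => F [tuple])); last by move=> x _; rewrite tuple0.
by rewrite sum_nat_const card_tuple expn0 mul1n.
Qed.

Lemma sum_pick N c (F : nat -> nat) : c < N ->
  \sum_(i < N) (if val i == c then F i else 0) = F c.
Proof.
move=> hc; rewrite (bigD1 (Ordinal hc)) //= eqxx big1 ?addn0 // => i ne.
rewrite ifF //; apply: contraNF ne => /eqP e; apply/eqP/val_inj; exact: e.
Qed.

Lemma sum_exists N m (f : 'I_m -> nat) (F : nat -> nat) :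
  injective f -> (forall t, f t < N) ->
  \sum_(i < N) (if [exists t, val i == f t] then F i else 0) = \sum_(t < m) F (f t).
Proof.
move=> inj hb.
transitivity (\sum_(t < m) \sum_(i < N) (if val i == f t then F i else 0)); last first.
  by apply eq_bigr => t _; rewrite sum_pick.
rewrite exchange_big; apply eq_bigr => i _.
case: existsP => [[t0 /eqP e]|ne].
- rewrite (bigD1 t0) //= e eqxx big1 ?addn0 // => t ne'.
  rewrite ifF //; apply/negbTE; apply: contra ne' => /eqP /inj ->; by [].
- rewrite big1 // => t _; rewrite ifF //; apply/negbTE; apply/negP => /eqP e.
  by apply: ne; exists t; rewrite e.
Qed.

Lemma sum_ge n m : \sum_(c < n) (m <= c : nat) = n - m.
Proof. elim: n => [|n IH]; first by rewrite big_ord0. rewrite big_ord_recr /= IH. case: leqP; lia. Qed.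

Lemma sum_lt n m : \sum_(c < n) (c < m : nat) = minn m n.
Proof. elim: n => [|n IH]; first by rewrite big_ord0 minn0. rewrite big_ord_recr /= IH. case: ltnP; lia. Qed.

Lemma sum_id2 n : 2 * \sum_(c < n) (c : nat) = n * (n - 1).
Proof. elim: n => [|n IH]; first by rewrite big_ord0. rewrite big_ord_recr /= mulnDr IH. case: n {IH}; [by []|]; move=> n; nia. Qed.

Definition vpath p k s (y : seq nat) := is_pathV p k s (last 0 y) y.

Definition PS p k s (G : seq nat -> nat) :=
  \sum_(x : (2 * s).-tuple 'I_(p ^ k.+1) | vpath p k s (map val x)) G (map val x).

Lemma isV_vpath p k s l y : is_pathV p k s l y = vpath p k s y && (last 0 y == l).
Proof. by rewrite /vpath /is_pathV eqxx andbT !andbA. Qed.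

Lemma MV_PS p k s l : MV p k s l = PS p k s (fun y => (last 0 y == l) * des p k y).
Proof.
rewrite /MV /PS big_mkcond [RHS]big_mkcond; apply eq_bigr => x _.
rewrite isV_vpath; case: (vpath p k s _) => //=; by case: (_ == l); rewrite ?mul1n ?mul0n.
Qed.

Lemma vpath_size p k s y : vpath p k s y -> size y = 2 * s.
Proof. by case/and5P => _ /eqP. Qed.

Lemma vpath_last p k s y : vpath p k s y -> last 0 y < p ^ k.
Proof.
case/and5P => s0 /eqP hs /allP hv _ _.
have := hv (2 * s).-1. rewrite mem_iota hs add0n.
have h1 : (2 * s).-1 < 2 * s by lia.
move=> /(_ h1). rewrite /vrange.
have -> : ((2 * s).-1 == 0) = false by lia.
have e : (2 * s).-1 = 2 * s.-1 + 1 by lia.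
have -> : odd (2 * s).-1 by rewrite e oddD oddM.
by rewrite -hs nth_last.
Qed.

Lemma vpath_cat p k s y a b : size y = 2 * s -> 0 < s ->
  vpath p k s.+1 (y ++ [:: a; b]) = vpath p k s y &&
    [&& vrange p k (2 * s) a, vrange p k (2 * s).+1 b,
        edge p k (2 * s).-1 (last 0 y) a & edge p k (2 * s) a b].
Proof.
move=> hs s0.
set z := y ++ [:: a; b].
have nz : forall i, i < 2 * s -> nth 0 z i = nth 0 y i.
  by move=> i hi; rewrite /z nth_cat hs hi.
have za : nth 0 z (2 * s) = a by rewrite /z nth_cat hs ltnn subnn.
have zb : nth 0 z (2 * s).+1 = b by rewrite /z nth_cat hs ltnNge leqnSn /= subSnn.
have zl : nth 0 z (2 * s).-1 = last 0 y by rewrite nz ?(prednK) -?hs ?nth_last //; lia.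
have sz : size z = (2 * s).+2 by rewrite /z size_cat hs addn2.
rewrite /vpath /is_pathV /z last_cat /= -/z sz hs !eqxx !andbT.
have -> : (2 * s).+2 == 2 * s.+1 by rewrite mulnS.
rewrite s0.
have i1 : iota 0 (2 * s).+2 = iota 0 (2 * s) ++ [:: 2 * s; (2 * s).+1] by rewrite -addn2 iotaD.
rewrite i1.
have -> : iota 0 (2 * s).+1 = iota 0 (2 * s).-1 ++ [:: (2 * s).-1; 2 * s].
  have e : (2 * s).+1 = (2 * s).-1 + 2 by lia.
  by rewrite e iotaD /= add0n prednK //; lia.
rewrite !all_cat /= za zb zl.
have -> : (2 * s).-1.+1 = 2 * s by lia.
rewrite za.
have -> : all (fun a0 => vrange p k a0 (nth 0 z a0)) (iota 0 (2 * s)) =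
          all (fun a0 => vrange p k a0 (nth 0 y a0)) (iota 0 (2 * s)).
  by apply eq_in_all => i; rewrite mem_iota add0n => /andP [_ hi]; rewrite nz.
have -> : all (fun a0 => edge p k a0 (nth 0 z a0) (nth 0 z a0.+1)) (iota 0 (2 * s).-1) =
          all (fun a0 => edge p k a0 (nth 0 y a0) (nth 0 y a0.+1)) (iota 0 (2 * s).-1).
  apply eq_in_all => i; rewrite mem_iota add0n => /andP [_ hi]; rewrite !nz //; lia.
rewrite !andbT.
by case: (all _ _); case: (all _ _); case: (vrange _ _ _ a); case: (vrange _ _ _ b);
   case: (edge _ _ _ _ a); case: (edge _ _ _ a b).
Qed.

Definition dd (B1 B2 : nat * nat) : bool := (B2.1 < B1.1) && (B1.2 < B2.2).

Lemma blk_odd p k a u v : odd a -> blk p k a u v = blk p k 1 u v.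
Proof. move=> oa; rewrite /blk oa. by have -> : (a == 0) = false by case: a oa. Qed.

Lemma blk_even p k a u v : a != 0 -> ~~ odd a -> blk p k a u v = blk p k 2 u v.
Proof. move=> a0 oa; rewrite /blk (negbTE oa) (negbTE a0) //. Qed.

Lemma des_cat p k s y a b : size y = 2 * s -> 0 < s ->
  des p k (y ++ [:: a; b]) = des p k y
    + (1 < s) * dd (blk p k 2 (nth 0 y (2 * s - 2)) (last 0 y)) (blk p k 1 (last 0 y) a)
    + dd (blk p k 1 (last 0 y) a) (blk p k 2 a b).
Proof.
move=> hs s0.
set z := y ++ [:: a; b].
have nz : forall i, i < 2 * s -> nth 0 z i = nth 0 y i.
  by move=> i hi; rewrite /z nth_cat hs hi.
have za : nth 0 z (2 * s) = a by rewrite /z nth_cat hs ltnn subnn.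
have zb : nth 0 z (2 * s).+1 = b by rewrite /z nth_cat hs ltnNge leqnSn /= subSnn.
have zl : nth 0 z (2 * s - 1) = last 0 y.
  rewrite nz; last by lia. by rewrite subn1 -hs nth_last.
have sz : size z = (2 * s).+2 by rewrite /z size_cat hs addn2.
rewrite /des sz.
have -> : des1 p k z = des1 p k y.
  by rewrite /des1 /block !nz //; lia.
rewrite big_nat_recr /=; last by lia.
have e1 : desj p k z (2 * s).+1 = dd (blk p k 1 (last 0 y) a) (blk p k 2 a b).
  rewrite /desj /block.
  have -> : (2 * s).+1 - 2 = 2 * s - 1 by lia.
  have -> : (2 * s).+1 - 1 = 2 * s by lia.
  have -> : (2 * s).+2 - 2 = 2 * s by lia.
  have -> : (2 * s).+2 - 1 = (2 * s).+1 by lia.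
  rewrite zl za zb (@blk_odd p k (2 * s - 1)); last first.
    have e : 2 * s - 1 = 2 * s.-1 + 1 by lia.
    by rewrite e oddD oddM.
  rewrite (@blk_even _ _ (2 * s)) //; last by rewrite oddM.
  by lia.
have e2 : forall j, 3 <= j < 2 * s -> desj p k z j = desj p k y j.
  move=> j /andP [h1 h2]; rewrite /desj /block !nz //; lia.
rewrite e1.
case: (ltnP 1 s) => hs1.
- rewrite big_nat_recr /=; last by lia.
  have -> : \sum_(3 <= i < 2 * s) desj p k z i = \sum_(3 <= i < 2 * s) desj p k y i by apply: eq_big_nat => j hj; rewrite e2.
  rewrite hs mul1n.
  have -> : desj p k z (2 * s) = dd (blk p k 2 (nth 0 y (2 * s - 2)) (last 0 y)) (blk p k 1 (last 0 y) a).
    rewrite /desj /block.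
    have -> : (2 * s).+1 - 2 = 2 * s - 1 by lia.
    have -> : (2 * s).+1 - 1 = 2 * s by lia.
    rewrite zl za nz; last by lia.
    rewrite (@blk_even p k (2 * s - 2)); last 2 first.
    - by lia.
    - have e : 2 * s - 2 = 2 * s.-1 by lia.
      by rewrite e oddM.
    rewrite (@blk_odd p k (2 * s - 1)) //.
    have e : 2 * s - 1 = 2 * s.-1 + 1 by lia.
    by rewrite e oddD oddM.
  by rewrite /dd; lia.
- have e : s = 1 by lia.
  subst s.
  rewrite hs !big_geq //= mul0n; lia.
Qed.

Lemma sum_tuple2 (T : finType) n m (e : m = n.+2) (F : seq T -> nat) :
  \sum_(x : m.-tuple T) F x = \sum_(x : n.-tuple T) \sum_(a : T) \sum_(b : T) F (x ++ [:: a; b]).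
Proof.
subst m. rewrite sum_tuple_rcons (@sum_tuple_rcons T n (fun x => \sum_(a : T) F (rcons x a))).
apply eq_bigr => x _; apply eq_bigr => a _; apply eq_bigr => b _.
by rewrite -!cats1 -catA.
Qed.

Lemma PS_ext p k s F G : (forall y, vpath p k s y -> F y = G y) -> PS p k s F = PS p k s G.
Proof. move=> h; apply eq_bigr => x hx; exact: h. Qed.

Lemma PS_add p k s F G : PS p k s (fun y => F y + G y) = PS p k s F + PS p k s G.
Proof. by rewrite /PS big_split. Qed.

Lemma PS_mull p k s c F : PS p k s (fun y => c * F y) = c * PS p k s F.
Proof. by rewrite /PS big_distrr. Qed.

Lemma PS_sum p k s n (F : nat -> seq nat -> nat) :
  PS p k s (fun y => \sum_(i < n) F i y) = \sum_(i < n) PS p k s (F i).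
Proof. by rewrite /PS exchange_big. Qed.

Lemma edge_even p k a u v : a != 0 -> ~~ odd a -> edge p k a u v = (v == u %% p ^ k).
Proof.
move=> a0 oa; rewrite /edge (negbTE oa) (negbTE a0).
by rewrite {1}(divn_eq u (p ^ k)) mulnC addKn.
Qed.

Lemma edge_odd p k a u v : odd a -> edge p k a u v = [exists b : 'I_p, v == p * u + b].
Proof. move=> oa; rewrite /edge oa. by have -> : (a == 0) = false by case: a oa. Qed.

Lemma vrange_even p k a u : a != 0 -> ~~ odd a -> vrange p k a u = (u < p ^ k * p).
Proof. move=> a0 oa; by rewrite /vrange (negbTE oa) (negbTE a0). Qed.

Lemma vrange_odd p k a u : odd a -> vrange p k a u = (u < p ^ k).
Proof. move=> oa; rewrite /vrange oa. by have -> : (a == 0) = false by case: a oa. Qed.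

Lemma PS_step p k s G : 0 < s -> 0 < p ->
  PS p k s.+1 G = PS p k s (fun y => \sum_(c < p)
     G (y ++ [:: p * last 0 y + c; (p * last 0 y + c) %% p ^ k])).
Proof.
move=> s0 p0.
have q0 : 0 < p ^ k by rewrite expn_gt0 p0.
have e : 2 * s.+1 = (2 * s).+2 by rewrite mulnS.
rewrite /PS big_mkcond (sum_tuple2 e (fun z : seq 'I_(p ^ k.+1) => if vpath p k s.+1 (map val z) then G (map val z) else 0)) [RHS]big_mkcond.
apply eq_bigr => x _.
have hs : size (map val x) = 2 * s by rewrite size_map size_tuple.
set y := map val x.
under eq_bigr => a _ do under eq_bigr => b _ do rewrite map_cat /= vpath_cat //.
case hp: (vpath p k s y); last first.
  by rewrite big1 // => a _; rewrite big1.
have hl := vpath_last hp.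
set l := last 0 y.
have o1 : odd (2 * s).-1.
  have e1 : (2 * s).-1 = 2 * s.-1 + 1 by lia.
  by rewrite e1 oddD oddM.
have o2 : ~~ odd (2 * s) by rewrite oddM.
have n2 : 2 * s != 0 by lia.
under eq_bigr => a _.
  under eq_bigr => b _ do
    rewrite /= (@vrange_even p k (2 * s) a n2 o2) (@vrange_odd p k (2 * s).+1 b) ?oddS ?o2 //
            (@edge_odd p k _ l a o1) (@edge_even p k (2 * s) a b n2 o2).
  over.
rewrite /=.
have NN : p ^ k * p = p ^ k.+1 by rewrite expnSr.
rewrite -(@sum_exists (p ^ k.+1) p (fun c : 'I_p => p * l + c)
           (fun a => G (y ++ [:: a; a %% p ^ k]))); first last.
- move=> c; rewrite -NN; have := ltn_ord c; nia.
- by move=> c1 c2 /eqP; rewrite eqn_add2l => /eqP /val_inj.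
apply eq_bigr => a _.
case E: [exists t : 'I_p, val a == p * l + t]; last first.
  by rewrite big1 // => b _; rewrite !andbF.
have ha : a < p ^ k * p.
  case/existsP: E => c /eqP ->; have := ltn_ord c; nia.
rewrite (@eq_bigr _ _ _ _ _ _ _ (fun b : 'I_(p ^ k.+1) => if val b == a %% p ^ k then G (y ++ [:: val a; val b]) else 0)).
  rewrite (@sum_pick _ _ (fun i => G (y ++ [:: val a; i]))) //. apply: leq_trans (ltn_pmod _ q0) _. by rewrite -NN leq_pmulr.
move=> b _; rewrite ha /=.
case: eqP => [e1|_]; last by rewrite !andbF.
by rewrite e1 ltn_pmod.
Qed.

Lemma PS_base p k (K : nat -> nat) : 0 < p ->
  PS p k 1 (fun y => K (last 0 y)) = (p - 1) * \sum_(l < p ^ k) K l.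
Proof.
move=> p0.
have q0 : 0 < p ^ k by rewrite expn_gt0 p0.
have NN : p ^ k * p = p ^ k.+1 by rewrite expnSr.
have e : 2 * 1 = 0.+2 by [].
rewrite /PS big_mkcond (sum_tuple2 e (fun z : seq 'I_(p ^ k.+1) => if vpath p k 1 (map val z) then K (last 0 (map val z)) else 0)).
rewrite sum_tuple0 /= exchange_big /=.
rewrite big_distrr /= (@big_ord_widen _ _ _ _ (p ^ k.+1) (fun l => (p - 1) * K l)); last first.
  by rewrite -NN leq_pmulr.
rewrite [RHS]big_mkcond /=; apply eq_bigr => b _.
rewrite /vpath /is_pathV /= /vrange /edge /= eqxx !andbT.
case hb: (b < p ^ k); last first.
  by rewrite big1 // => a _; rewrite andbF.
rewrite (@eq_bigr _ _ _ _ _ _ _ (fun a : 'I_(p ^ k.+1) => if [exists t : 'I_(p - 1), val a == p ^ k * t + b] then K b else 0)).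
  rewrite (@sum_exists _ _ (fun t : 'I_(p - 1) => p ^ k * t + b) (fun _ => K b)).
  - by rewrite sum_nat_const card_ord.
  - by move=> t1 t2 /eqP; rewrite eqn_add2r eqn_pmul2l // => /eqP /val_inj.
  - move=> t; have h1 : p ^ k * t + b < p ^ k * p by have := ltn_ord t; have := hb; nia.
    by apply: leq_trans h1 _; rewrite NN.
move=> a _; rewrite andbT.
case E: [exists _, _]; rewrite ?andbF //.
case/existsP: E => t /eqP ->.
have := ltn_ord t; move: hb => /ltP hb /ltP ht.
have -> : p ^ k * t + b < p ^ k * (p - 1) by apply/ltP; nia.
by [].
Qed.

Lemma odd_half p : odd p -> p = 2 * ((p - 1) %/ 2) + 1.
Proof. move=> o; have := modn2 p; rewrite o /=; lia. Qed.

Lemma k0_count p s : 0 < p -> 0 < s -> PS p 0 s (fun _ => 1) = (p - 1) * p ^ (s - 1).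
Proof.
move=> p0; elim: s => [//|s IH] _.
case: s IH => [|s] IH.
  have := @PS_base p 0 (fun _ => 1) p0. rewrite /= => ->.
  by rewrite expn0 big_ord1 !muln1.
rewrite PS_step //.
rewrite (@PS_ext _ _ _ _ (fun y => p * 1)); last first.
  by move=> y _; rewrite sum_nat_const card_ord muln1.
rewrite PS_mull IH //.
have -> : s.+2 - 1 = (s.+1 - 1).+1 by lia.
rewrite expnS; lia.
Qed.

Lemma k0_last p s y : 0 < p -> vpath p 0 s y -> last 0 y = 0.
Proof. move=> p0 /vpath_last; rewrite expn0; lia. Qed.

Lemma k0_step p s : odd p -> 1 < s ->
  MV p 0 s.+1 0 = p * MV p 0 s 0 + (p - 1) ^ 2 * p ^ (s - 1).
Proof.
move=> po s1.
have hp := odd_half po. set h := (p - 1) %/ 2 in hp.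
have p0 : 0 < p by lia.
rewrite !MV_PS PS_step; [| lia | lia].
have hm : PS p 0 s (fun y => (last 0 y == 0) * des p 0 y) = PS p 0 s (des p 0).
  by apply PS_ext => y hy; rewrite (k0_last p0 hy) eqxx mul1n.
rewrite hm.
rewrite (@PS_ext _ _ _ _ (fun y => p * des p 0 y +
   (\sum_(c < p) dd (blk p 0 2 (nth 0 y (2 * s - 2)) 0) (blk p 0 1 0 c) +
    \sum_(c < p) dd (blk p 0 1 0 c) (blk p 0 2 c 0)))); last first.
  move=> y hy.
  have s0 : 0 < s by lia.
  rewrite (k0_last p0 hy) muln0.
  under eq_bigr => c _ do rewrite add0n expn0 modn1 last_cat /= ?eqxx ?mul1n
      (@des_cat p 0 s y c 0 (vpath_size hy) s0) (k0_last p0 hy) s1 mul1n.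
  rewrite !big_split /= !sum_nat_const !card_ord /des mulnDr; lia.
rewrite (@PS_add p 0 s (fun y => p * des p 0 y)) (@PS_add p 0 s (fun y => \sum_(c < p) dd (blk p 0 2 (nth 0 y (2 * s - 2)) 0) (blk p 0 1 0 c))) (@PS_mull p 0 s p (des p 0)).
have hO : forall c, c < p -> dd (blk p 0 1 0 c) (blk p 0 2 c 0) = (c < h).
  move=> c hc; rewrite /dd /blk /= expn0 !mul1n divn1 !muln0 !subn0 add0n. lia.
have hB : PS p 0 s (fun y => \sum_(c < p) dd (blk p 0 1 0 c) (blk p 0 2 c 0)) = h * ((p - 1) * p ^ (s - 1)).
  rewrite (@PS_ext p 0 s _ (fun y => h * 1)); last first.
    move=> y _; rewrite (eq_bigr (fun c : 'I_p => nat_of_bool (c < h))); last by move=> c _; rewrite hO.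
    by rewrite sum_lt muln1; lia.
  by rewrite PS_mull k0_count //; lia.
have hA : PS p 0 s (fun y => \sum_(c < p) dd (blk p 0 2 (nth 0 y (2 * s - 2)) 0) (blk p 0 1 0 c))
          = (p * h) * ((p - 1) * p ^ (s - 2)).
  clear hm hB; case: s s1 => [//|r] r1.
  rewrite PS_step; [| lia | lia].
  rewrite (@PS_ext _ _ _ _ (fun y => (p * h) * 1)); last first.
    move=> y hy.
    have -> : 2 * r.+1 - 2 = size y by rewrite (vpath_size hy); lia.
    under eq_bigr => c _ do rewrite nth_cat ltnn subnn /=.
    have hE : forall u c : nat, u < p -> c < p ->
       dd (blk p 0 2 u 0) (blk p 0 1 0 c) = (p - u <= c).
      move=> u c hu hc; rewrite /dd /blk /= expn0 !mul1n divn1 !muln0 !subn0 add0n. lia.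
    rewrite (k0_last p0 hy) muln0.
    rewrite (eq_bigr (fun c : 'I_p => c : nat)); last first.
      move=> c _; rewrite add0n (eq_bigr (fun c' : 'I_p => nat_of_bool (p - c <= c'))).
        by rewrite sum_ge; have := ltn_ord c; lia.
      by move=> c' _; rewrite hE.
    have e := sum_id2 p; rewrite muln1; apply/eqP; rewrite -(eqn_pmul2l (_ : 0 < 2)) // e; apply/eqP; nia.
  rewrite PS_mull k0_count //; lia.
rewrite hA hB.
case: s s1 {hm hA hB} => [//|r] r1.
have -> : r.+1 - 1 = (r - 1).+1 by lia.
have -> : r.+1 - 2 = r - 1 by lia.
rewrite expnS. nia.
Qed.

Lemma part1 p : odd p -> forall s, 2 <= s ->
  MV p 0 (s + 2) 0 = p * MV p 0 s 0 + (p - 1) * MV p 0 (s + 1) 0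
                     + p ^ (s - 1) * (p - 1) * (p ^ 2 - 1).
Proof.
move=> po s s2.
have h1 : 1 < s.+1 by lia.
have h2 : 1 < s by lia.
rewrite addn2 addn1 (@k0_step p s.+1 po h1) (@k0_step p s po h2).
have -> : s.+1 - 1 = (s - 1).+1 by lia.
rewrite (expnS p (s - 1)).
move: (p ^ (s - 1)) (MV p 0 s 0) => X M.
case: p po => [//|P] _.
have -> : P.+1 - 1 = P by lia.
have -> : P.+1 ^ 2 - 1 = P * (P + 2) by rewrite expnS expn1; lia.
nia.
Qed.

Lemma sum_pickm n t (F : nat -> nat) : t < n -> \sum_(c < n) (c == t :> nat) * F c = F t.
Proof.
move=> ht; rewrite -(@sum_pick n t F) //; apply eq_bigr => c _.
by case: eqP; rewrite ?mul1n ?mul0n.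
Qed.

Lemma k1_modp p l c : c < p -> (p * l + c) %% p ^ 1 = c.
Proof. by move=> hc; rewrite expn1 mulnC modnMDl modn_small. Qed.

Lemma k1_divp p l c : c < p -> (p * l + c) %/ p = l.
Proof. move=> hc; rewrite mulnC divnMDl ?divn_small ?addn0 //; lia. Qed.

Lemma k1_last_uniform p r (K : nat -> nat) : 0 < p -> 0 < r ->
  PS p 1 r (fun y => K (last 0 y)) = (p - 1) * p ^ (r - 1) * \sum_(l < p) K l.
Proof.
move=> p0; elim: r K => [//|r IH] K _.
case: r IH => [|r] IH.
  have := @PS_base p 1 K p0. rewrite /= => ->.
  by rewrite expn1 expn0 muln1.
rewrite PS_step //.
rewrite (@PS_ext _ _ _ _ (fun y => (\sum_(c < p) K c) * 1)); last first.
  move=> y _; rewrite muln1; apply eq_bigr => c _.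
  by rewrite last_cat /= k1_modp.
rewrite PS_mull.
have := IH (fun _ => 1) (ltn0Sn _). rewrite /= => ->.
rewrite sum_nat_const card_ord muln1.
have -> : r.+2 - 1 = (r.+1 - 1).+1 by lia.
rewrite expnS; lia.
Qed.

Lemma k1_uniform2 p s (H : nat -> nat -> nat) : 0 < p -> 1 < s ->
  PS p 1 s (fun y => H (nth 0 y (2 * s - 2) %/ p) (last 0 y))
   = (p - 1) * p ^ (s - 2) * \sum_(x < p) \sum_(l < p) H x l.
Proof.
move=> p0; case: s => [//|r] r1.
rewrite PS_step; [| lia | lia].
rewrite (@PS_ext _ _ _ _ (fun y => (fun l => \sum_(c < p) H l c) (last 0 y))); last first.
  move=> y hy; apply eq_bigr => c _.
  have -> : 2 * r.+1 - 2 = size y by rewrite (vpath_size hy); lia.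
  by rewrite nth_cat ltnn subnn /= last_cat /= k1_modp // k1_divp.
rewrite (@k1_last_uniform p r (fun l => \sum_(c < p) H l c)) //.
Qed.

Definition dO1 p l t := dd (blk p 1 1 l (p * l + t)) (blk p 1 2 (p * l + t) t).
Definition dE1 p x l t := dd (p * x, p * (p - 1 - x)) (blk p 1 1 l (p * l + t)).

Lemma k1_step p s t : 0 < p -> 1 < s -> t < p ->
  MV p 1 s.+1 t = \sum_(t2 < p) MV p 1 s t2
    + (p - 1) * p ^ (s - 2) * (\sum_(x < p) \sum_(l < p) dE1 p x l t)
    + (p - 1) * p ^ (s - 2) * (p * \sum_(l < p) dO1 p l t).
Proof.
move=> p0 s1 ht.
have s0 : 0 < s by lia.
rewrite MV_PS PS_step //.
rewrite (@PS_ext _ _ _ _ (fun y => des p 1 y + dE1 p (nth 0 y (2 * s - 2) %/ p) (last 0 y) t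
                                     + dO1 p (last 0 y) t)); last first.
  move=> y hy.
  under eq_bigr => c _ do rewrite last_cat /= (k1_modp (last 0 y) (ltn_ord c))
      (@des_cat p 1 s y _ _ (vpath_size hy) s0) s1 mul1n.
  rewrite (@sum_pickm p t (fun c => des p 1 y +
       dd (blk p 1 2 (nth 0 y (2 * s - 2)) (last 0 y)) (blk p 1 1 (last 0 y) (p * last 0 y + c)) +
       dd (blk p 1 1 (last 0 y) (p * last 0 y + c)) (blk p 1 2 (p * last 0 y + c) ((p * last 0 y + c) %% p ^ 1)))) //.
rewrite (@PS_add p 1 s (fun y => des p 1 y + _)) (@PS_add p 1 s (des p 1)).
have hd : PS p 1 s (des p 1) = \sum_(t2 < p) MV p 1 s t2.
  rewrite (eq_bigr (fun t2 : 'I_p => PS p 1 s (fun y => (last 0 y == t2 :> nat) * des p 1 y))); last first.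
    by move=> t2 _; rewrite MV_PS.
  rewrite -(@PS_sum p 1 s p (fun t2 y => (last 0 y == t2 :> nat) * des p 1 y)).
  apply PS_ext => y hy.
  have hl := vpath_last hy; rewrite expn1 in hl.
  under eq_bigr => t2 _ do rewrite eq_sym.
  by rewrite (@sum_pickm p (last 0 y) (fun _ => des p 1 y)).
rewrite hd.
rewrite (@k1_uniform2 p s (fun x l => dE1 p x l t)) //.
rewrite (@k1_uniform2 p s (fun x l => dO1 p l t)) //.
by rewrite sum_nat_const card_ord.
Qed.

Lemma cA h t : t < 2 * h + 1 ->
  \sum_(l < 2 * h + 1) dO1 (2 * h + 1) l t = h + (t < h).
Proof.
move=> ht.
rewrite (eq_bigr (fun l : 'I_(2 * h + 1) => (l < h : nat) + (l == h :> nat) * (t < h))); last first.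
  move=> l _; have hl := ltn_ord l.
  rewrite /dO1 /dd /blk /= expn1 k1_divp // addKn.
  set p := 2 * h + 1 in hl ht *.
  have e : ((p * l < p * (p - 1) - ((p - 1) * l + t)) && ((p - 1) * l + t < p * (p - 1 - l)))
            = (l < h) || (l == h :> nat) && (t < h) by rewrite /p; nia.
  rewrite e; case: ltnP => h1; case: eqP => h2 //=; lia.
rewrite big_split /= sum_lt (@sum_pickm (2 * h + 1) h (fun _ => (t < h : nat))); last by lia.
lia.
Qed.

Lemma cB h t : t < 2 * h + 1 ->
  \sum_(x < 2 * h + 1) \sum_(l < 2 * h + 1) dE1 (2 * h + 1) x l t = (2 * h + 1) * h + t.
Proof.
move=> ht.
set p := 2 * h + 1 in ht *.
rewrite (eq_bigr (fun x : 'I_p => (x : nat) + (p - t <= x))); last first.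
  move=> x _; have hx := ltn_ord x.
  rewrite (eq_bigr (fun l : 'I_p => (p - x <= l : nat) + (l == p - 1 - x :> nat) * (p - 1 - x < t))); last first.
    move=> l _; have hl := ltn_ord l.
    rewrite /dE1 /dd /blk /= expn1 addKn.
    have e : ((p * (p - 1) - ((p - 1) * l + t) < p * x) && (p * (p - 1 - x) < (p - 1) * l + t))
            = (p <= x + l) || (x + l == p - 1) && (l < t) by move: hx hl ht; rewrite /p; nia.
    rewrite e; lia.
  rewrite big_split /= sum_ge (@sum_pickm p (p - 1 - x) (fun _ => (p - 1 - x < t : nat))); last by lia.
  case: leqP => h1; case: ltnP => h2 /=; lia.
rewrite big_split /= sum_ge.
have e := sum_id2 p.
have : \sum_(i < p) (i : nat) = p * h.
  apply/eqP; rewrite -(eqn_pmul2l (_ : 0 < 2)) // e; apply/eqP; rewrite /p; nia.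
move=> ->; clearbody p; lia.
Qed.

Lemma part2 p : prime p -> odd p -> forall s t : nat, 3 <= s -> t <= p - 1 ->
     MV p 1 (s + 2) t =
       \sum_(t2 < p) MV p 1 s t2
       + \sum_(1 <= t1 < p) MV p 1 (s + 1) t1
       + (if t < (p - 1) %/ 2
          then p ^ (s - 1) * (p - 1) * (p ^ 2 + p + t)
          else p ^ (s - 1) * (p - 1) * (p ^ 2 + t)).
Proof.
move=> pp po s t s3 ht1.
have hp := odd_half po. set h := (p - 1) %/ 2 in hp *.
have p1 := prime_gt1 pp.
have p0 : 0 < p by lia.
have ht : t < p by lia.
have h0 : 0 < h by lia.
have ht' : t < 2 * h + 1 by lia.
have h0' : 0 < 2 * h + 1 by lia.
have cA1 := cA ht'. have cB1 := cB ht'. have cA0 := cA h0'. have cB0 := cB h0'.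
rewrite -hp in cA1 cB1 cA0 cB0.
have e1 : \sum_(t2 < p) MV p 1 s.+1 t2 = MV p 1 s.+1 0 + \sum_(1 <= t1 < p) MV p 1 s.+1 t1.
  by rewrite -(big_mkord xpredT (fun t2 => MV p 1 s.+1 t2)) (big_ltn p0).
rewrite addn2 addn1 (@k1_step p s.+1 t p0) //; last by lia.
rewrite e1 (@k1_step p s 0 p0) //; last by lia.
rewrite cA1 cB1 cA0 cB0.
have -> : s.+1 - 2 = (s - 2).+1 by lia.
have -> : s - 1 = (s - 2).+1 by lia.
rewrite !expnS.
move: (p ^ (s - 2)) => X.
move: (\sum_(t2 < p) MV p 1 s t2) (\sum_(1 <= t1 < p) MV p 1 s.+1 t1) => A B.
rewrite hp.
rewrite expn0 muln1. have -> : 2 * h + 1 - 1 = 2 * h by lia.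
case: (ltnP t h) => htt /=; nia.
Qed.

Theorem mainTheorem13 (p : nat) (p_prime : prime p) (p_odd : odd p) :
  (forall s : nat, 2 <= s ->
     MV p 0 (s + 2) 0 =
       p * MV p 0 s 0 + (p - 1) * MV p 0 (s + 1) 0
       + p ^ (s - 1) * (p - 1) * (p ^ 2 - 1))
  /\
  (forall s t : nat, 3 <= s -> t <= p - 1 ->
     MV p 1 (s + 2) t =
       \sum_(t2 < p) MV p 1 s t2
       + \sum_(1 <= t1 < p) MV p 1 (s + 1) t1
       + (if t < (p - 1) %/ 2
          then p ^ (s - 1) * (p - 1) * (p ^ 2 + p + t)
          else p ^ (s - 1) * (p - 1) * (p ^ 2 + t))).
Proof.
split; [exact: part1 | exact: part2].
Qed.
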